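(* Let $(p_m)$ and $(q_n)$ belong to $SVA_{reg(\alpha)}$ (for some $\alpha\ge0$), and let $(u_{mn})$ be a double sequence of complex numbers that is $(\overline{N},p,q)$ summable to a number $\ell$. If $$\frac{P_m}{p_m}\Delta_{10}u_{mn}=O(1)\quad\text{and}\quad\frac{Q_n}{q_n}\Delta_{01}u_{mn}=O(1),$$ then $(u_{mn})$ is $P$-convergent to $\ell$.
   Context: Weights: $(p_m)_{m\ge0},(q_n)_{n\ge0}$ are sequences of positive reals with $P_m=\sum_{i=0}^m p_i\to\infty$ and $Q_n=\sum_{j=0}^n q_j\to\infty$. $SVA_{reg(\alpha)}$ denotes the set of positive sequences $(p_m)$ whose partial sums have the form $P_m=(m+1)^{\alpha}L(m)$ ($m\ge0$) with a constant $\alpha\ge0$ and a slowly varying function $L$ on $(0,\infty)$, i.e. $L$ positive, measurable, and $L(\lambda t)/L(t)\to1$ as $t\to\infty$ for every $\lambda>0$. The weighted means are $\sigma_{mn}=\frac{1}{P_mQ_n}\sum_{i=0}^m\sum_{j=0}^n p_iq_ju_{ij}$; $(u_{mn})$ is $(\overline{N},p,q)$ summable to $\ell$ if $(\sigma_{mn})$ is $P$-convergent to $\ell$. A double sequence $(a_{mn})$ is $P$-convergent to $\ell$ if for every $\epsilon>0$ there is $n_0$ with $|a_{mn}-\ell|<\epsilon$ whenever $m,n\ge n_0$. $\Delta_{10}u_{mn}=u_{mn}-u_{m-1,n}$ and $\Delta_{01}u_{mn}=u_{mn}-u_{m,n-1}$. For a double array, $a_{mn}=O(1)$ means there exist constants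 $H>0$ and $n_0$ such that $|a_{mn}|\le H$ for all $m,n\ge n_0$. *)

(* Defs.v *)
From HB Require Import structures.
From mathcomp Require Import all_boot all_order all_algebra.
From mathcomp Require Import all_classical all_reals all_analysis.
From mathcomp Require Import complex.
Set Implicit Arguments. Unset Strict Implicit. Unset Printing Implicit Defensive.
Import Order.TTheory GRing.Theory Num.Theory.
Import numFieldNormedType.Exports.
Local Open Scope classical_set_scope.
Local Open Scope ring_scope.
Local Open Scope complex_scope.

Definition psum {R : realType} (p : nat -> R) (m : nat) : R := \sum_(i < m.+1) p i.

Definition slowly_varying {R : realType} (L : R -> R) : Prop :=
  (forall t : R, 0 < t -> 0 < L t) /\
  measurable_fun [set t : R | 0 < t] L /\
  (forall lam : R, 0 < lam -> (fun t => L (lam * t) / L t) @ +oo --> (1 : R)).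

Definition SVA_reg {R : realType} (alpha : R) (p : nat -> R) : Prop :=
  0 <= alpha /\ (forall m, 0 < p m) /\
  exists L : R -> R, slowly_varying L /\
    forall m : nat, psum p m = (m.+1%:R) `^ alpha * L m%:R.

Definition wmean {R : realType} (p q : nat -> R) (u : nat -> nat -> R[i])
    (m n : nat) : R[i] :=
  ((psum p m * psum q n)^-1)%:C *
    \sum_(i < m.+1) \sum_(j < n.+1) ((p i * q j)%:C * u i j).

Definition Pconv {R : realType} (a : nat -> nat -> R[i]) (l : R[i]) : Prop :=
  forall eps : R, 0 < eps -> exists n0 : nat,
    forall m n, (n0 <= m)%N -> (n0 <= n)%N -> `|a m n - l| < eps%:C.

Definition bigO1 {R : realType} (a : nat -> nat -> R[i]) : Prop :=
  exists H : R, 0 < H /\ exists n0 : nat,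
    forall m n, (n0 <= m)%N -> (n0 <= n)%N -> `|a m n| <= H%:C.

(* backward differences (at index 0 the predecessor is truncated to 0; irrelevant for O(1)) *)
Definition D10 {R : realType} (u : nat -> nat -> R[i]) m n := u m n - u m.-1 n.
Definition D01 {R : realType} (u : nat -> nat -> R[i]) m n := u m n - u m n.-1.

(* Main.v *)
Require Import Defs.
From HB Require Import structures.
From mathcomp Require Import all_boot all_order all_algebra.
From mathcomp Require Import all_classical all_reals all_analysis.
From mathcomp Require Import complex.
From mathcomp Require Import ring lra.
Import Order.TTheory GRing.Theory Num.Theory.
Import numFieldNormedType.Exports.
Local Open Scope classical_set_scope.
Local Open Scope ring_scope.
Local Open Scope complex_scope.
Import ComplexField.Normc.

Section Helpers.
Variable R : realType.

Lemma eqle (x y : R) : x = y -> x <= y.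
Proof. by move->. Qed.

Lemma ncE (z : R[i]) : `|z| = (normc z)%:C.
Proof. by []. Qed.

Lemma ncR (x : R) : normc (x%:C) = `|x|.
Proof. by rewrite /normc /= expr0n /= addr0 sqrtr_sqr. Qed.

Lemma nc_ge0 (z : R[i]) : 0 <= normc z.
Proof. by case: z => a b; rewrite /normc sqrtr_ge0. Qed.

Lemma ncD (x y : R[i]) : normc (x + y) <= normc x + normc y.
Proof. exact: le_normcD. Qed.

Lemma ncB (x y : R[i]) : normc (x - y) <= normc x + normc y.
Proof. by apply: (le_trans (ncD _ _)); rewrite (@normcN R y). Qed.

Lemma ncMr (x : R) (z : R[i]) : 0 <= x -> normc (x%:C * z) = x * normc z.
Proof. by move=> x0; rewrite normcM ncR ger0_norm. Qed.

Lemma nc_sum (I : Type) (r : seq I) (P : pred I) (F : I -> R[i]) :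
  normc (\sum_(i <- r | P i) F i) <= \sum_(i <- r | P i) normc (F i).
Proof. rewrite -lecR -ncE rmorph_sum /=. exact: ler_norm_sum. Qed.

Lemma psumS (p : nat -> R) m : psum p m.+1 = psum p m + p m.+1.
Proof. by rewrite /psum big_ord_recr. Qed.

Lemma psum_gt0 (p : nat -> R) m : (forall i, 0 < p i) -> 0 < psum p m.
Proof.
move=> hp; elim: m => [|m IH]; first by rewrite /psum big_ord1.
by rewrite psumS addr_gt0.
Qed.

Lemma psum_le (p : nat -> R) i m : (forall i, 0 < p i) -> (i <= m)%N ->
  psum p i <= psum p m.
Proof.
move=> hp; elim: m => [|m IH]; first by rewrite leqn0 => /eqP->.
rewrite leq_eqVlt => /orP[/eqP->//|]; rewrite ltnS => /IH h.
by rewrite psumS (le_trans h) // lerDl ltW.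
Qed.

Lemma psum_split (p : nat -> R) k m : (k <= m)%N ->
  psum p m = psum p k + \sum_(k.+1 <= i < m.+1) p i.
Proof.
move=> km; rewrite /psum -!(big_mkord xpredT (fun i => p i)).
by rewrite (@big_cat_nat _ _ _ k.+1 0 m.+1) // ltnS.
Qed.

Lemma chain_bound (f : nat -> R[i]) (w : nat -> R) (H : R) (n0 : nat) :
  (forall j, 0 < w j) -> 0 <= H ->
  (forall j, (n0 < j)%N -> normc (f j - f j.-1) <= H * w j / psum w j) ->
  forall i m, (n0 <= i)%N -> (i <= m)%N ->
  normc (f m - f i) <= H * (psum w m - psum w i) / psum w i.
Proof.
move=> hw H0 hf i m ni; elim: m => [|m IH].
  by rewrite leqn0 => /eqP->; rewrite !subrr normc0 mulr0 mul0r.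
rewrite leq_eqVlt => /orP[/eqP->|]; first by rewrite !subrr normc0 mulr0 mul0r.
rewrite ltnS => im.
have h1 := hf m.+1 (leq_ltn_trans ni (im : (i < m.+1)%N)).
have wi := psum_gt0 w i hw.
have wm := psum_gt0 w m.+1 hw.
have le_im : psum w i <= psum w m.+1 by apply: psum_le; last exact: leqW.
have -> : f m.+1 - f i = (f m.+1 - f m.+1.-1) + (f m - f i) by rewrite /=; ring.
apply: (le_trans (ncD _ _)).
apply: (le_trans (lerD h1 (IH im))).
rewrite psumS.
have : H * w m.+1 / psum w m.+1 <= H * w m.+1 / psum w i.
  apply: ler_wpM2l; first by rewrite mulr_ge0 // ltW.
  by rewrite lef_pV2 // posrE.
rewrite psumS => h2.
have -> : H * (psum w m + w m.+1 - psum w i) / psum w i =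
   H * w m.+1 / psum w i + H * (psum w m - psum w i) / psum w i.
  by field; rewrite gt_eqF.
by rewrite lerD2r.
Qed.

Lemma search (P : nat -> bool) N m : P N -> ~~ P m -> (N <= m)%N ->
  exists k, [/\ (N <= k)%N, (k < m)%N, P k & ~~ P k.+1].
Proof.
move=> PN; elim: m => [|m IH].
  by rewrite leqn0 => Pm /eqP E; move: Pm; rewrite -E PN.
move=> Pm; rewrite leq_eqVlt => /orP[/eqP E|]; first by move: Pm; rewrite -E PN.
rewrite ltnS => Nm; case Pm': (P m).
  by exists m; split.
have [k [h1 h2 h3 h4]] := IH (negbT Pm') Nm.
by exists k; split => //; rewrite ltnS ltnW.
Qed.

Lemma choose_k (w : nat -> R) (d : R) (N : nat) :
  (forall j, 0 < w j) -> 0 < d -> (fun m => psum w m) @ \oo --> +oo ->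
  exists M, forall m, (M <= m)%N -> exists k,
    [/\ (N <= k)%N, (k < m)%N, psum w k * (1 + d) <= psum w m
      & psum w m < psum w k.+1 * (1 + d)].
Proof.
move=> hw d0 hW.
have [M _ HM] := cvgry_ge hW (psum w N * (1 + d)).
exists (maxn M N) => m; rewrite geq_max => /andP[Mm Nm].
have hm : psum w N * (1 + d) <= psum w m by exact: HM.
have hn : ~~ (psum w m * (1 + d) <= psum w m).
  rewrite -ltNge; have := psum_gt0 w m hw; nra.
have [k [h1 h2 h3 h4]] := @search (fun k => psum w k * (1 + d) <= psum w m) N m
   hm hn Nm.
by exists k; split => //; rewrite ltNge.
Qed.

Lemma split_sum (G : nat -> R[i]) x y : (x <= y)%N ->
  \sum_(i < y.+1) G i = \sum_(i < x.+1) G i + \sum_(x.+1 <= i < y.+1) G i.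
Proof.
move=> xy; rewrite -!(big_mkord xpredT G).
by rewrite (@big_cat_nat _ _ _ x.+1 0 y.+1) // ltnS.
Qed.

Lemma rect_sum (F : nat -> nat -> R[i]) k m l n : (k <= m)%N -> (l <= n)%N ->
  \sum_(i < m.+1) \sum_(j < n.+1) F i j - \sum_(i < k.+1) \sum_(j < n.+1) F i j
  - \sum_(i < m.+1) \sum_(j < l.+1) F i j + \sum_(i < k.+1) \sum_(j < l.+1) F i j
  = \sum_(k.+1 <= i < m.+1) \sum_(l.+1 <= j < n.+1) F i j.
Proof.
move=> km ln.
rewrite (split_sum (fun i => \sum_(j < n.+1) F i j) k m km).
rewrite (split_sum (fun i => \sum_(j < l.+1) F i j) k m km).
have -> : forall a b c d : R[i], a + b - a - (c + d) + c = b - d by move=> *; ring.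
rewrite -sumrB; apply: eq_bigr => i _.
rewrite (split_sum (fun j => F i j) l n ln); ring.
Qed.

Lemma rect_wR (p q : nat -> R) k m l n : (k <= m)%N -> (l <= n)%N ->
  \sum_(k.+1 <= i < m.+1) \sum_(l.+1 <= j < n.+1) (p i * q j)
  = (psum p m - psum p k) * (psum q n - psum q l).
Proof.
move=> km ln.
rewrite (psum_split p k m km) (psum_split q l n ln) ![psum _ _ + _]addrC !addrK.
by rewrite big_distrlr.
Qed.

Lemma rect_wC (p q : nat -> R) k m l n : (k <= m)%N -> (l <= n)%N ->
  \sum_(k.+1 <= i < m.+1) \sum_(l.+1 <= j < n.+1) (p i * q j)%:C
  = ((psum p m - psum p k) * (psum q n - psum q l))%:C.
Proof.
move=> km ln; rewrite -rect_wR // rmorph_sum; apply: eq_bigr => i _.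
by rewrite rmorph_sum.
Qed.

End Helpers.

Theorem theorem5p2 (R : realType) (alpha : R) (p q : nat -> R)
    (u : nat -> nat -> R[i]) (l : R[i]) :
  SVA_reg alpha p -> SVA_reg alpha q ->
  (fun m => psum p m) @ \oo --> +oo ->
  (fun n => psum q n) @ \oo --> +oo ->
  Pconv (wmean p q u) l ->
  bigO1 (fun m n => ((psum p m / p m)%:C) * D10 u m n) ->
  bigO1 (fun m n => ((psum q n / q n)%:C) * D01 u m n) ->
  Pconv u l.
Proof.
move=> [_ [hp _]] [_ [hq _]] HP HQ Hs [H1 [H1p [n1 Hb1]]] [H2 [H2p [n2 Hb2]]].
move=> eps eps0.
have row : forall n, (n1 <= n)%N -> forall i m, (n1 <= i)%N -> (i <= m)%N ->
    normc (u m n - u i n) <= H1 * (psum p m - psum p i) / psum p i.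
  move=> n hn; apply: (@chain_bound R (fun i => u i n)) => //; first exact: ltW.
  move=> j hj /=; have := Hb1 j n (ltnW hj) hn.
  rewrite ncE lecR normcM ncR /D10 ger0_norm; last first.
    by rewrite divr_ge0 // ltW // ?psum_gt0.
  move=> h.
  have Pj := psum_gt0 _ p j hp; have pj := hp j.
  have -> : normc (u j n - u j.-1 n) =
     (p j / psum p j) * ((psum p j / p j) * normc (u j n - u j.-1 n)).
    by field; rewrite !gt_eqF.
  apply: (le_trans (ler_wpM2l _ h)); first by rewrite divr_ge0 // ltW.
  by apply: eqle; ring.
have col : forall i, (n2 <= i)%N -> forall j n, (n2 <= j)%N -> (j <= n)%N ->
    normc (u i n - u i j) <= H2 * (psum q n - psum q j) / psum q j.
  move=> i hi; apply: (@chain_bound R (u i)) => //; first exact: ltW.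
  move=> j hj /=; have := Hb2 i j hi (ltnW hj).
  rewrite ncE lecR normcM ncR /D01 ger0_norm; last first.
    by rewrite divr_ge0 // ltW // ?psum_gt0.
  move=> h.
  have Pj := psum_gt0 _ q j hq; have pj := hq j.
  have -> : normc (u i j - u i j.-1) =
     (q j / psum q j) * ((psum q j / q j) * normc (u i j - u i j.-1)).
    by field; rewrite !gt_eqF.
  apply: (le_trans (ler_wpM2l _ h)); first by rewrite divr_ge0 // ltW.
  by apply: eqle; ring.
set d := eps / (2 * (H1 + H2 + 1)).
have d0 : 0 < d by rewrite /d divr_gt0 // mulr_gt0 // addr_gt0 // addr_gt0.
set e0 := eps * d ^+ 2 / (2 * (2 + d) ^+ 2).
have e00 : 0 < e0.
  apply: divr_gt0; first by apply: mulr_gt0 => //; exact: exprn_gt0.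
  by apply: mulr_gt0 => //; apply: exprn_gt0; exact: addr_gt0.
have [N0 HN0] := Hs e0 e00.
have HN0' : forall x y, (N0 <= x)%N -> (N0 <= y)%N ->
    normc (wmean p q u x y - l) < e0.
  by move=> x y hx hy; rewrite -ltcR -ncE; apply: HN0.
set N := maxn N0 (maxn n1 n2).
have [M1 HM1] := @choose_k R p d N hp d0 HP.
have [M2 HM2] := @choose_k R q d N hq d0 HQ.
exists (maxn M1 M2) => m n hm hn.
have [k [Nk km hk1 hk2]] := HM1 m (leq_trans (leq_maxl _ _) hm).
have [l' [Nl ln hl1 hl2]] := HM2 n (leq_trans (leq_maxr _ _) hn).
move: Nk Nl; rewrite !geq_max => /and3P[N0k n1k n2k] /and3P[N0l n1l n2l].
rewrite ncE ltcR.
have km' : (k <= m)%N := ltnW km.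
have ln' : (l' <= n)%N := ltnW ln.
have hpa : 0 < (psum p k) := psum_gt0 _ p k hp.
have hpb : 0 < (psum q l') := psum_gt0 _ q l' hq.
have had := mulr_gt0 hpa d0.
have hbd := mulr_gt0 hpb d0.
have hAa : 0 < (psum p m) - (psum p k) by rewrite subr_gt0; lra.
have hBb : 0 < (psum q n) - (psum q l') by rewrite subr_gt0; lra.
have hwA : 0 < (((psum p m) - (psum p k)) * ((psum q n) - (psum q l'))) by rewrite mulr_gt0.
have Tm : forall x y, \sum_(i < x.+1) \sum_(j < y.+1) ((p i * q j)%:C * u i j)
    = (psum p x * psum q y)%:C * wmean p q u x y.
  move=> x y; rewrite /wmean mulrA -rmorphM /= mulfV ?rmorph1 ?mul1r //.
  by rewrite mulf_neq0 // gt_eqF // psum_gt0.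
have eR := @rect_sum _ (fun i j => (p i * q j)%:C * u i j) k m l' n km' ln'.
have eW := @rect_wC _ p q k m l' n km' ln'.
have e1 : \sum_(k.+1 <= i < m.+1) \sum_(l'.+1 <= j < n.+1)
      ((p i * q j)%:C * (u m n - u i j))
    = (((psum p m) - (psum p k)) * ((psum q n) - (psum q l')))%:C * u m n - \sum_(k.+1 <= i < m.+1) \sum_(l'.+1 <= j < n.+1)
      ((p i * q j)%:C * u i j).
  rewrite -eW mulr_suml -sumrB; apply: eq_bigr => i _.
  by rewrite mulr_suml -sumrB; apply: eq_bigr => j _; rewrite mulrBr.
have key : (((psum p m) - (psum p k)) * ((psum q n) - (psum q l')))%:C * (u m n - l) =
   \sum_(k.+1 <= i < m.+1) \sum_(l'.+1 <= j < n.+1)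
      ((p i * q j)%:C * (u m n - u i j))
   + (((((psum p m) * (psum q n))%:C * (wmean p q u m n - l) - ((psum p k) * (psum q n))%:C * (wmean p q u k n - l))
       - ((psum p m) * (psum q l'))%:C * (wmean p q u m l' - l)) + ((psum p k) * (psum q l'))%:C * (wmean p q u k l' - l)).
  rewrite e1 -eR !Tm !rmorphM !rmorphB /=; ring.
have pt : forall i j, (k < i)%N -> (i <= m)%N -> (l' < j)%N -> (j <= n)%N ->
    normc (u m n - u i j) <= (H1 + H2) * d.
  move=> i j ki im lj jn.
  have -> : u m n - u i j = (u m n - u i n) + (u i n - u i j) by ring.
  apply: (le_trans (@ncD _ _ _)); rewrite mulrDl; apply: lerD.
    apply: (le_trans (row n (leq_trans n1l (ltnW (leq_ltn_trans (leqnn _) ln)))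
         i m (leq_trans n1k (ltnW ki)) im)).
    have Pi := psum_gt0 _ p i hp.
    have : psum p k.+1 <= psum p i by apply: psum_le.
    move=> h; rewrite -mulrA; apply: ler_wpM2l; first exact: ltW.
    rewrite ler_pdivrMr //; nra.
  apply: (le_trans (col i (leq_trans n2k (ltnW ki))
         j n (leq_trans n2l (ltnW lj)) jn)).
  have Qj := psum_gt0 _ q j hq.
  have : psum q l'.+1 <= psum q j by apply: psum_le.
  move=> h; rewrite -mulrA; apply: ler_wpM2l; first exact: ltW.
  rewrite ler_pdivrMr //; nra.
have bd1 : normc (\sum_(k.+1 <= i < m.+1) \sum_(l'.+1 <= j < n.+1)
      ((p i * q j)%:C * (u m n - u i j))) <= (((psum p m) - (psum p k)) * ((psum q n) - (psum q l'))) * ((H1 + H2) * d).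
  apply: (le_trans (@nc_sum _ _ _ _ _)).
  rewrite -(@rect_wR _ p q k m l' n km' ln') mulr_suml.
  rewrite big_nat_cond [X in _ <= X]big_nat_cond; apply: ler_sum => i.
  move=> /andP[/andP[ki im] _].
  apply: (le_trans (@nc_sum _ _ _ _ _)); rewrite mulr_suml.
  rewrite big_nat_cond [X in _ <= X]big_nat_cond; apply: ler_sum => j.
  move=> /andP[/andP[lj jn] _].
  rewrite ncMr; last by rewrite mulr_ge0 // ltW.
  apply: ler_wpM2l; first by rewrite mulr_ge0 // ltW.
  exact: pt.
have tb : forall (x : R) y z, 0 <= x -> (N0 <= y)%N -> (N0 <= z)%N ->
    normc (x%:C * (wmean p q u y z - l)) <= x * e0.
  move=> x y z x0 hy hz; rewrite ncMr //; apply: ler_wpM2l => //.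
  exact: ltW (HN0' _ _ hy hz).
have hmN : (N0 <= m)%N := leq_trans N0k (ltnW km).
have hnN : (N0 <= n)%N := leq_trans N0l (ltnW ln).
have bd2 : normc (((((psum p m) * (psum q n))%:C * (wmean p q u m n - l) - ((psum p k) * (psum q n))%:C * (wmean p q u k n - l))
       - ((psum p m) * (psum q l'))%:C * (wmean p q u m l' - l)) + ((psum p k) * (psum q l'))%:C * (wmean p q u k l' - l))
    <= (psum p m) * (psum q n) * e0 + (psum p k) * (psum q n) * e0 + (psum p m) * (psum q l') * e0 + (psum p k) * (psum q l') * e0.
  have A0 : 0 <= (psum p m) by rewrite ltW // psum_gt0.
  have B0 : 0 <= (psum q n) by rewrite ltW // psum_gt0.
  apply: (le_trans (@ncD _ _ _)); apply: lerD; last by (apply: tb => //; apply: mulr_ge0; apply: ltW => //; exact: psum_gt0).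
  apply: (le_trans (@ncB _ _ _)); apply: lerD; last by (apply: tb => //; apply: mulr_ge0; apply: ltW => //; exact: psum_gt0).
  apply: (le_trans (@ncB _ _ _)); apply: lerD; by (apply: tb => //; apply: mulr_ge0; apply: ltW => //; exact: psum_gt0).
have main : (((psum p m) - (psum p k)) * ((psum q n) - (psum q l'))) * normc (u m n - l) <=
    (((psum p m) - (psum p k)) * ((psum q n) - (psum q l'))) * ((H1 + H2) * d) + ((psum p m) * (psum q n) * e0 + (psum p k) * (psum q n) * e0 + (psum p m) * (psum q l') * e0 + (psum p k) * (psum q l') * e0).
  rewrite -ncMr; last exact: ltW.
  rewrite key; apply: (le_trans (@ncD _ _ _)); exact: lerD.
have c1 : ((psum p m) + (psum p k)) * d <= ((psum p m) - (psum p k)) * (2 + d) by nra.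
have c2 : ((psum q n) + (psum q l')) * d <= ((psum q n) - (psum q l')) * (2 + d) by nra.
have c3 : (psum p m) * (psum q n) * e0 + (psum p k) * (psum q n) * e0 + (psum p m) * (psum q l') * e0 + (psum p k) * (psum q l') * e0 <= eps / 2 * (((psum p m) - (psum p k)) * ((psum q n) - (psum q l'))).
  have -> : (psum p m) * (psum q n) * e0 + (psum p k) * (psum q n) * e0 + (psum p m) * (psum q l') * e0 + (psum p k) * (psum q l') * e0 =
     eps / (2 * (2 + d) ^+ 2) * ((((psum p m) + (psum p k)) * d) * (((psum q n) + (psum q l')) * d)).
    by rewrite /e0; field; rewrite gt_eqF // addr_gt0.
  have -> : eps / 2 * (((psum p m) - (psum p k)) * ((psum q n) - (psum q l'))) =
     eps / (2 * (2 + d) ^+ 2) * ((((psum p m) - (psum p k)) * (2 + d)) * (((psum q n) - (psum q l')) * (2 + d))).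
    by field; rewrite gt_eqF // addr_gt0.
  apply: ler_wpM2l.
    apply: divr_ge0; first exact: ltW.
    by apply: mulr_ge0 => //; apply: exprn_ge0; apply: addr_ge0 => //; exact: ltW.
  apply: ler_pM => //; nra.
have c4 : (H1 + H2) * d < eps / 2.
  have -> : (H1 + H2) * d = eps / 2 - eps / (2 * (H1 + H2 + 1)).
    by rewrite /d; field; rewrite gt_eqF // addr_gt0 // addr_gt0.
  by rewrite ltrBlDr ltrDl divr_gt0 // mulr_gt0 // addr_gt0 // addr_gt0.
have nc0 := nc_ge0 _ (u m n - l).
nra.
Qed.
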